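(* Let $\Sigma$ be an Ehrhart fan of dimension $d$. Then the homogeneous degree-$d$ component of the polynomial $\widehat\chi_\Sigma$ equals $\frac{1}{d!}\widehat V_\Sigma$, where $\widehat\chi_\Sigma(z)=\chi_\Sigma([\sum_\rho z_\rho\delta_\rho])$ and $\widehat V_\Sigma(z)=\deg_\Sigma\big((\sum_{\rho}z_\rho x_\rho)^d\big)$ for $z\in\mathbb{Z}^{\Sigma(1)}$. That is, the leading term of the Ehrhart polynomial is $\frac1{d!}V_\Sigma$.
   Context: $N$ is a free abelian group, $N_\mathbb{R}=N\otimes\mathbb{R}$, $M=\mathrm{Hom}(N,\mathbb{Z})$ viewed as integral linear functions. A fan is unimodular if it contains the origin and for each cone the primitive ray generators $u_\rho\in N$ extend to a $\mathbb{Z}$-basis of $N$. $\mathrm{PL}(\Sigma)\cong\mathbb{Z}^{\Sigma(1)}$: functions on $|\Sigma|$ agreeing on each cone with some element of $M$; $\underline{\mathrm{PL}}(\Sigma)$ its quotient by restrictions of elements of $M$. Courant function $\delta_\rho$: $1$ at $u_\rho$, $0$ at other ray generators. Star fan $\Sigma^\sigma$: image in $N_\mathbb{R}/\mathrm{span}(\sigma)$ (lattice $N/\mathrm{Span}_\mathbb{Z}(\sigma\cap N)$) of all cones that are faces of cones containing $\sigma$; $[f]^\sigma$ is the class of the function induced by $f-m$, $m\in M$ agreeing with $f$ on $\sigma$. A unimodular fan $\Sigma$ is Ehrhart (recursively on dimension) if (1) $\Sigma^\rho$ is Ehrhart for every ray $\rho$, and (2) there is $\chi_\Sigma:\underline{\mathrm{PL}}(\Sigma)\to\mathbb{Z}$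 with $\chi_\Sigma(0)=1$ and $\chi_\Sigma([f])=\chi_\Sigma([f-\delta_\rho])+\chi_{\Sigma^\rho}([f]^\rho)$ for all $f,\rho$; such $\chi_\Sigma$ is unique and $\widehat\chi_\Sigma$ is a polynomial of degree $\dim\Sigma$ in $\mathbb{Q}[z_\rho]$. Let $\underline{\mathrm{PP}}^*(\Sigma)=\mathbb{Z}[x_\rho\mid\rho\in\Sigma(1)]/(\mathcal{J}_1+\mathcal{J}_2)$, where $\mathcal{J}_1$ is generated by the monomials $x_{\rho_1}\cdots x_{\rho_k}$ with $\rho_1,\dots,\rho_k$ not spanning a cone of $\Sigma$ and $\mathcal{J}_2$ by the linear forms $\sum_\rho m(u_\rho)x_\rho$, $m\in M$; it is graded by degree. An Ehrhart fan of dimension $d$ is balanced (for every $\tau\in\Sigma(d-1)$, $\sum_{\sigma\in\Sigma(d),\tau\subseteq\sigma}u_{\sigma(1)\setminus\tau(1)}\in\mathrm{span}(\tau)$), and for such a fan there is a unique $\mathbb{Z}$-linear map $\deg_\Sigma:\underline{\mathrm{PP}}^d(\Sigma)\to\mathbb{Z}$ with $\deg_\Sigma(x_{\rho_1}\cdots x_{\rho_d})=1$ whenever $\rho_1,\dots,\rho_d$ are the rays of a cone in $\Sigma(d)$. The volume polynomial is $V_\Sigma([f])=\deg_\Sigma([f]^d)$ with $[f]$ identified with the class of $\sum_\rho f(u_\rho)x_\rho$. *)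

(* Defs.v *)
From HB Require Import structures.
From mathcomp Require Import all_boot all_order all_algebra.
From mathcomp Require Import mpoly.
Set Implicit Arguments. Unset Strict Implicit. Unset Printing Implicit Defensive.
Import Order.TTheory GRing.Theory Num.Theory.
Local Open Scope ring_scope.

(* Lattice N = Z^n (row vectors 'rV[int]_n); M = Hom(N,Z) is identified with
   Z^n via the standard pairing.  The rays of the fan are indexed by 'I_r, with
   primitive generators u : 'I_r -> 'rV[int]_n; a cone is recorded by the set of
   its rays. *)

Definition pair_int (n : nat) (m u : 'rV[int]_n) : int := \sum_(k < n) m 0 k * u 0 k.

Definition in_cone (n r : nat) (u : 'I_r -> 'rV[int]_n) (S : {set 'I_r})
  (x : 'rV[rat]_n) : Prop :=
  exists lam : 'I_r -> rat, (forall i, 0 <= lam i) /\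
    x = \sum_(i in S) lam i *: map_mx (fun z : int => z%:~R) (u i).

Definition unimodular_fan (n r : nat) (u : 'I_r -> 'rV[int]_n)
  (cones : {set {set 'I_r}}) : Prop :=
  [/\ set0 \in cones,
      (forall i : 'I_r, [set i] \in cones),
      (forall S T : {set 'I_r}, S \in cones -> T \subset S -> T \in cones),
      (* unimodularity: the generators of each cone extend to a Z-basis of N *)
      (forall S, S \in cones -> exists B : 'M[int]_n, exists g : 'I_r -> 'I_n,
          B \in unitmx /\ {in S &, injective g} /\ (forall i, i \in S -> row (g i) B = u i))
    & (* fan condition: the intersection of two cones is a common face *)
      (forall S T, S \in cones -> T \in cones -> forall x,
          in_cone u S x -> in_cone u T x -> in_cone u (S :&: T) x)].

Definition fan_dim (r : nat) (cones : {set {set 'I_r}}) : nat :=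
  \max_(S in cones) #|S|.

Definition mres (n r : nat) (u : 'I_r -> 'rV[int]_n) (m : 'rV[int]_n) : 'I_r -> int :=
  fun i => pair_int m (u i).

(* Courant function delta_rho, as an element of PL(Sigma) = Z^{Sigma(1)} *)
Definition courant (r : nat) (j : 'I_r) : 'I_r -> int := fun i => (i == j)%:R.

(* rays of the star fan Sigma^sigma, for sigma a cone *)
Definition link (r : nat) (cones : {set {set 'I_r}}) (sigma : {set 'I_r}) : {set 'I_r} :=
  [set t | (t \notin sigma) && (t |: sigma \in cones)].

(* The star fan Sigma^sigma lives in N/Span(sigma), its rays are indexed by
   link sigma, PL(Sigma^sigma) = Z^{link sigma} (we use functions 'I_r -> int and
   ignore the values outside link sigma), and its dual lattice is
   {m in M | m vanishes on sigma}.  Iterated stars (Sigma^rho1)^rho2 ... are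
   canonically Sigma^{rho1,rho2,...}.  An Ehrhart fan is thus exactly one for
   which there is a family (chi_sigma)_{sigma in Sigma}, chi_sigma being the
   function chi_{Sigma^sigma} of the star fan, satisfying the defining
   conditions of chi at every iterated star. *)
Definition ehrhart_family (n r : nat) (u : 'I_r -> 'rV[int]_n)
  (cones : {set {set 'I_r}}) (chi : {set 'I_r} -> ('I_r -> int) -> int) : Prop :=
  forall sigma, sigma \in cones ->
  [/\ (* chi_sigma is a function on PL(Sigma^sigma) ... *)
      (forall f g : 'I_r -> int, (forall t, t \in link cones sigma -> f t = g t) ->
          chi sigma f = chi sigma g),
      (* ... which descends to the quotient by the dual lattice of N/Span(sigma) *)
      (forall (f : 'I_r -> int) (m : 'rV[int]_n),
          (forall i, i \in sigma -> pair_int m (u i) = 0) ->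
          chi sigma (f \+ mres u m) = chi sigma f),
      chi sigma (fun _ => 0) = 1
    & (* recursion chi([f]) = chi([f - delta_rho]) + chi_{Sigma^rho}([f]^rho) *)
      (forall t, t \in link cones sigma -> forall (f : 'I_r -> int) (m : 'rV[int]_n),
          (forall i, i \in sigma -> pair_int m (u i) = 0) -> pair_int m (u t) = f t ->
          chi sigma f = chi sigma (f \- courant t) + chi (t |: sigma) (f \- mres u m))].

Definition ehrhart_fan (n r : nat) (u : 'I_r -> 'rV[int]_n) (cones : {set {set 'I_r}}) : Prop :=
  unimodular_fan u cones /\ exists chi, ehrhart_family u cones chi.

(* Generators of the ideal J_1 + J_2 of Z[x_rho | rho in Sigma(1)] *)
Definition PP_gen (n r : nat) (u : 'I_r -> 'rV[int]_n) (cones : {set {set 'I_r}})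
  (h : {mpoly int[r]}) : Prop :=
  (exists a : 'X_{1..r}, h = 'X_[a] /\ [set i | (0 < a i)%N] \notin cones)
  \/ (exists m : 'rV[int]_n, h = \sum_(i < r) (pair_int m (u i))%:MP * 'X_i).

Definition PP_ideal (n r : nat) (u : 'I_r -> 'rV[int]_n) (cones : {set {set 'I_r}})
  (p : {mpoly int[r]}) : Prop :=
  exists s : seq ({mpoly int[r]} * {mpoly int[r]}),
    (forall x, x \in s -> PP_gen u cones x.2) /\ p = \sum_(x <- s) x.1 * x.2.

(* L induces a Z-linear map deg : PP^d(Sigma) -> Z normalized on Sigma(d):
   L is additive, kills the degree-d part of J_1 + J_2 (so only its restriction
   to the degree-d part modulo the ideal matters), and sends
   x_{rho_1}...x_{rho_d} to 1 for every d-dimensional cone. *)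
Definition is_deg_map (n r : nat) (u : 'I_r -> 'rV[int]_n) (cones : {set {set 'I_r}})
  (L : {mpoly int[r]} -> int) : Prop :=
  let d := fan_dim cones in
  [/\ (forall p q, L (p + q) = L p + L q),
      (forall p, p \is d.-homog -> PP_ideal u cones p -> L p = 0)
    & (forall S, S \in cones -> #|S| = d -> L (\prod_(i in S) 'X_i) = 1)].

Definition volume_poly_val (r : nat) (d : nat) (L : {mpoly int[r]} -> int)
  (z : 'I_r -> int) : int :=
  L ((\sum_(i < r) (z i)%:MP * 'X_i) ^+ d).

Definition homog_part (r : nat) (k : nat) (P : {mpoly rat[r]}) : {mpoly rat[r]} :=
  pihomog mdeg k P.

(* Main.v *)
Require Import Defs.
From HB Require Import structures.
From mathcomp Require Import all_boot all_order all_algebra.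
From mathcomp Require Import mpoly.
From mathcomp Require Import ring lra zify.
Set Implicit Arguments. Unset Strict Implicit. Unset Printing Implicit Defensive.
Import Order.TTheory GRing.Theory Num.Theory.
Local Open Scope ring_scope.

Definition Dlt (q : {poly rat}) := q - (q \Po ('X - 1%:P)).

Lemma DltD p q : Dlt (p + q) = Dlt p + Dlt q.
Proof. rewrite /Dlt comp_polyD; ring. Qed.

Lemma PD_prop (D : nat) :
  (size ('X^D - ('X - (1 : rat)%:P) ^+ D)%R <= D)%N /\
  ('X^D - ('X - (1 : rat)%:P) ^+ D)`_D.-1 = D%:R.
Proof.
elim: D => [|D [IHs IHc]].
  by rewrite !expr0 subrr size_poly0 coef0.
have E : 'X^(D.+1) - ('X - (1 : rat)%:P) ^+ D.+1 =
   'X * ('X^D - ('X - 1%:P) ^+ D) + ('X - 1%:P) ^+ D.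
  by rewrite !exprS; ring.
have sz := size_exp_XsubC D (1 : rat).
have lc : (('X - (1 : rat)%:P) ^+ D)`_D = 1.
  have /monicP := monic_exp D (monicXsubC (1 : rat)).
  by move=> H; rewrite -[RHS]H lead_coefE sz.
rewrite E; split.
  apply/leq_sizeP => j hj; rewrite coefD coefXM.
  case: j hj => // j hj /=.
  move/leq_sizeP: IHs => -> //.
  by move/leq_sizeP: (leqnn (size (('X - (1 : rat)%:P) ^+ D))) => ->; rewrite ?addr0 // sz.
rewrite /= coefD coefXM lc.
case: D IHs IHc {E sz lc} => [|D] IHs IHc /=; first by rewrite add0r.
by move: IHc => /= ->; rewrite -!natr1.
Qed.

Lemma antidiff (D : nat) (h : {poly rat}) : (size h <= D)%N ->
  exists q : {poly rat}, [/\ (size q <= D.+1)%N, q`_D * D%:R = h`_D.-1 & Dlt q = h].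
Proof.
elim: D h => [|D IH] h hs.
  move: hs; rewrite leqn0 size_poly_eq0 => /eqP ->.
  by exists 0; split; rewrite ?size_poly0 ?coef0 ?mul0r // /Dlt comp_poly0 subrr.
pose c := h`_D.
pose q0 := (c / D.+1%:R) *: ('X^(D.+1) : {poly rat}).
have Eq0 : Dlt q0 = (c / D.+1%:R) *: ('X^(D.+1) - ('X - 1%:P) ^+ D.+1).
  by rewrite /Dlt /q0 comp_polyZ comp_Xn_poly scalerBr.
have [Ps Pc] := PD_prop D.+1.
have hD : D.+1%:R != 0 :> rat by rewrite pnatr_eq0.
have sh : (size (h - Dlt q0)%R <= D)%N.
  apply/leq_sizeP => j hj; rewrite coefB Eq0 coefZ.
  move: hj; rewrite leq_eqVlt => /orP [/eqP <-|hj].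
    by rewrite /= in Pc; rewrite Pc /c mulfVK // subrr.
  move/leq_sizeP: hs => -> //; move/leq_sizeP: Ps => -> //.
  by rewrite mulr0 subrr.
have [q1 [s1 c1 d1]] := IH _ sh.
exists (q0 + q1); split.
- rewrite (leq_trans (size_add _ _)) // geq_max (leq_trans s1) // andbT.
  by rewrite /q0 (leq_trans (size_scale_leq _ _)) // size_polyXn.
- rewrite coefD /q0 coefZ coefXn eqxx mulr1.
  move/leq_sizeP: s1 => -> //; rewrite addr0 /= mulfVK //.
- by rewrite DltD d1 addrC subrK.
Qed.


Definition urep (D : nat) (lc : rat) (F : int -> rat) :=
  exists p : {poly rat}, [/\ (size p <= D.+1)%N, p`_D = lc & forall k : int, p.[k%:~R] = F k].

Lemma int_const (g : int -> rat) : (forall s, g s = g (s - 1)) -> forall N, g N = g 0.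
Proof.
move=> H [n|n].
  elim: n => // n IH; rewrite -IH H; congr g; lia.
elim: n => [|n IH]; first by rewrite (H 0).
have -> : Negz n.+1 = Negz n - 1 by lia.
by rewrite -H IH.
Qed.

Lemma urep_ext D l F G : urep D l F -> (forall k, F k = G k) -> urep D l G.
Proof. by move=> [p [a b c]] E; exists p; split=> // k; rewrite c E. Qed.

Lemma urep0 D : urep D 0 (fun _ => 0).
Proof. by exists 0; split; rewrite ?size_poly0 ?coef0 // => k; rewrite horner0. Qed.

Lemma urep_add D l1 l2 F1 F2 : urep D l1 F1 -> urep D l2 F2 ->
  urep D (l1 + l2) (fun k => F1 k + F2 k).
Proof.
move=> [p [a b c]] [q [a' b' c']]; exists (p + q); split.
- by rewrite (leq_trans (size_add _ _)) // geq_max a a'.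
- by rewrite coefD b b'.
- by move=> k; rewrite hornerD c c'.
Qed.

Lemma urep_opp D l F : urep D l F -> urep D (- l) (fun k => - F k).
Proof.
move=> [p [a b c]]; exists (- p); split.
- by rewrite size_polyN.
- by rewrite coefN b.
- by move=> k; rewrite hornerN c.
Qed.

Lemma urep_sum D (I : Type) (s : seq I) (l : I -> rat) (F : I -> int -> rat) :
  (forall i, urep D (l i) (F i)) ->
  urep D (\sum_(i <- s) l i) (fun k => \sum_(i <- s) F i k).
Proof.
move=> H; elim: s => [|i s IH].
  by rewrite big_nil; apply: urep_ext (urep0 D) _ => k; rewrite big_nil.
have -> : \sum_(j <- i :: s) l j = l i + \sum_(j <- s) l j by rewrite big_cons.
by apply: urep_ext (urep_add (H i) IH) _ => k; rewrite big_cons.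
Qed.

Lemma urep_step D l F H : (forall k, F k - F (k - 1) = H k) -> urep D l H ->
  urep D.+1 (l / D.+1%:R) F.
Proof.
move=> EF [h [hs hc hv]].
have [q [qs qc qd]] := antidiff hs.
exists (q + (F 0 - q.[0])%:P); split.
- rewrite (leq_trans (size_add _ _)) // geq_max qs /=.
  by rewrite (leq_trans (size_polyC_leq1 _)).
- rewrite coefD coefC /= addr0 -hc /= -qc mulfK //.
  by rewrite pnatr_eq0.
- pose g s := F s - q.[s%:~R].
  have Hg : forall s, g s = g (s - 1).
    move=> s; rewrite /g.
    have := EF s; rewrite -hv -qd /Dlt hornerD hornerN horner_comp.
    rewrite hornerXsubC rmorphB /= => E.
    apply/eqP; rewrite -subr_eq0; apply/eqP.
    by move: E; rewrite rmorph1; lra.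
  move=> k; have := int_const Hg k; rewrite /g hornerD hornerC /=.
  by lra.
Qed.

Lemma urep_sumstep D l (G : int -> int -> rat) (phi : int -> int -> rat) :
  (forall k s, G k s - G k (s - 1) = phi k s) ->
  (forall s, urep D l (fun k => phi k s)) ->
  forall N : int, urep D (N%:~R * l) (fun k => G k N - G k 0).
Proof.
move=> EG Hp [n|n].
  elim: n => [|n IH].
    by rewrite mul0r; apply: urep_ext (urep0 D) _ => k; rewrite subrr.
  have -> : (Posz n.+1)%:~R * l = n%:~R * l + l.
    by rewrite -[n.+1]addn1 PoszD intrD mulrDl rmorph1 mul1r.
  apply: urep_ext (urep_add IH (Hp n.+1)) _ => k.
  rewrite -(EG k n.+1).
  have -> : ((n.+1)%:Z - 1 = n%:Z)%R by lia.
  by lra.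
elim: n => [|n IH].
  have -> : (Negz 0)%:~R * l = - l by rewrite NegzE mulN1r.
  apply: urep_ext (urep_opp (Hp 0)) _ => k.
  rewrite -(EG k 0); have -> : (0 - 1 = Negz 0 :> int)%R by lia.
  by lra.
have -> : (Negz n.+1)%:~R * l = (Negz n)%:~R * l + - l.
  rewrite !NegzE !rmorphN /= -[(n.+2)%N]addn1 PoszD intrD rmorph1; ring.
apply: urep_ext (urep_add IH (urep_opp (Hp (Negz n)))) _ => k.
rewrite -(EG k (Negz n)).
have -> : (Negz n - 1 = Negz n.+1 :> int)%R by lia.
by lra.
Qed.


Lemma poly_int_roots (p : {poly rat}) : (forall k : int, p.[k%:~R] = 0) -> p = 0.
Proof.
move=> H; apply/eqP; apply/negPn/negP => nz.
pose rs := [seq (i%:R : rat) | i <- iota 0 (size p)].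
have := max_poly_roots nz.
have A : all (root p) rs.
  apply/allP => x /mapP [i _ ->]; apply/rootP.
  by have := H (Posz i).
have U : uniq_roots rs.
  rewrite uniq_rootsE map_inj_uniq ?iota_uniq //.
  by move=> a b /eqP; rewrite eqr_nat => /eqP.
rewrite uniq_rootsE in U.
by move/(_ _ A U); rewrite size_map size_iota ltnn.
Qed.

Lemma homog_line (r d : nat) (P : {mpoly rat[r]}) (z : 'I_r -> rat) :
  exists Q : {poly rat}, (forall x : rat, Q.[x] = P.@[fun i => x * z i]) /\
    Q`_d = (pihomog mdeg d P).@[z].
Proof.
exists (\sum_(m <- msupp P) (P@_m * \prod_i z i ^+ m i) *: 'X^(mdeg m)); split.
  move=> x; rewrite horner_sum mevalE; apply: eq_bigr => m _.
  rewrite hornerZ hornerXn mdegE -prodrXr.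
  rewrite -mulrA; congr (_ * _); rewrite -big_split /=.
  by apply: eq_bigr => i _; rewrite exprMn mulrC.
rewrite coef_sum /pihomog raddf_sum /= [RHS]big_mkcond /=; apply: eq_bigr => m _.
rewrite coefZ coefXn eq_sym; case: eqP => _.
  by rewrite mulr1 mevalZ mevalX.
by rewrite mulr0.
Qed.


Definition mrep (r : nat) (F : ('I_r -> int) -> rat) :=
  exists P : {mpoly rat[r]}, forall z, P.@[fun i => (z i)%:~R] = F z.

Lemma mrep_ext r (F G : ('I_r -> int) -> rat) : mrep F -> (forall z, F z = G z) -> mrep G.
Proof. by move=> [P HP] E; exists P => z; rewrite HP E. Qed.

Lemma mrep_const r (c : rat) : mrep (fun _ : 'I_r -> int => c).
Proof. by exists c%:MP => z; rewrite mevalC. Qed.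

Lemma mrep_add r (F G : ('I_r -> int) -> rat) : mrep F -> mrep G -> mrep (fun z => F z + G z).
Proof. by move=> [P HP] [Q HQ]; exists (P + Q) => z; rewrite mevalD HP HQ. Qed.

Lemma mrep_sub r (F G : ('I_r -> int) -> rat) : mrep F -> mrep G -> mrep (fun z => F z - G z).
Proof. by move=> [P HP] [Q HQ]; exists (P - Q) => z; rewrite mevalB HP HQ. Qed.

Lemma mrep_sum r (I : Type) (s : seq I) (F : I -> ('I_r -> int) -> rat) :
  (forall i, mrep (F i)) -> mrep (fun z => \sum_(i <- s) F i z).
Proof.
move=> H; elim: s => [|i s IH].
  by apply: mrep_ext (mrep_const _ 0) _ => z; rewrite big_nil.
by apply: mrep_ext (mrep_add (H i) IH) _ => z; rewrite big_cons.
Qed.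

Lemma meval_prod r (v : 'I_r -> rat) (I : Type) (s : seq I) (P : pred I) (F : I -> {mpoly rat[r]}) :
  (\prod_(i <- s | P i) F i).@[v] = \prod_(i <- s | P i) (F i).@[v].
Proof. by rewrite (big_morph (meval v) (mevalM v) (meval1 v)). Qed.

Lemma mrep_lin r (F : ('I_r -> int) -> rat) (A : 'I_r -> 'I_r -> int) :
  mrep F -> mrep (fun z => F (fun i => \sum_k A i k * z k)).
Proof.
move=> [P HP].
exists (P \mPo [tuple \sum_k ((A i k)%:~R)%:MP * 'X_k | i < r]) => z.
rewrite comp_mpoly_meval -HP; apply: meval_eq => i.
rewrite tnth_mktuple raddf_sum rmorph_sum /=; apply: eq_bigr => k _.
by rewrite mevalM mevalC mevalXU rmorphM.
Qed.

Lemma mantidiff_mono r (m : 'X_{1..r}) (j : 'I_r) :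
  exists Q : {mpoly rat[r]}, forall v : 'I_r -> rat,
    Q.@[v] - Q.@[fun i => v i - (i == j)%:R] = ('X_[m] : {mpoly rat[r]}).@[v].
Proof.
have hs : (size ('X^(m j) : {poly rat}) <= (m j).+1)%N by rewrite size_polyXn.
have [q [_ _ qd]] := antidiff hs.
exists ((\prod_(i | i != j) 'X_i ^+ m i) * \sum_(t < size q) (q`_t)%:MP * 'X_j ^+ t) => v.
have Hq : forall w : 'I_r -> rat,
    (\sum_(t < size q) (q`_t)%:MP * 'X_j ^+ t : {mpoly rat[r]}).@[w] = q.[w j].
  move=> w; rewrite horner_coef raddf_sum /=; apply: eq_bigr => t _.
  by rewrite mevalM mevalC rmorphXn /= mevalXU.
rewrite !mevalM !meval_prod !Hq eqxx.
have -> : \prod_(i | i != j) (('X_i ^+ m i : {mpoly rat[r]}).@[fun i0 => v i0 - (i0 == j)%:R]) =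
          \prod_(i | i != j) (('X_i ^+ m i : {mpoly rat[r]}).@[v]).
  apply: eq_bigr => i /negPf ij; rewrite !rmorphXn /= !mevalXU ij subr0 //.
rewrite -mulrBr.
have := congr1 (fun p => p.[v j]) qd; rewrite /Dlt /= hornerD hornerN horner_comp.
rewrite hornerXsubC hornerXn => ->.
rewrite mevalX [RHS](bigD1 j) //= [RHS]mulrC; congr (_ * _).
by apply: eq_bigr => i _; rewrite rmorphXn /= mevalXU.
Qed.

Lemma mantidiff r (P : {mpoly rat[r]}) (j : 'I_r) :
  exists Q : {mpoly rat[r]}, forall v : 'I_r -> rat,
    Q.@[v] - Q.@[fun i => v i - (i == j)%:R] = P.@[v].
Proof.
rewrite [P]mpolyE; elim: (msupp P) => [|m s [Q HQ]].
  by exists 0 => v; rewrite big_nil !meval0 subrr.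
have [Qm HQm] := mantidiff_mono m j.
exists (P@_m *: Qm + Q) => v.
rewrite big_cons !mevalD !mevalZ -HQ -HQm; ring.
Qed.


Section Main.
Variables (n r : nat) (u : 'I_r -> 'rV[int]_n) (cones : {set {set 'I_r}})
  (chi : {set 'I_r} -> ('I_r -> int) -> int) (L : {mpoly int[r]} -> int).
Hypothesis HU : unimodular_fan u cones.
Hypothesis HE : ehrhart_family u cones chi.
Hypothesis HL : is_deg_map u cones L.

Local Notation d := (fan_dim cones).

Lemma cone_card S : S \in cones -> (#|S| <= d)%N.
Proof. by move=> HS; rewrite /fan_dim (leq_bigmax_cond _ HS). Qed.

Lemma link_cone S t : t \in link cones S -> (t \notin S) /\ (t |: S \in cones).
Proof. by rewrite inE => /andP. Qed.

Lemma link_card S t : t \in link cones S -> #|t |: S| = #|S|.+1 /\ (#|S|.+1 <= d)%N.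
Proof.
move=> /link_cone [h1 h2]; have e : #|t |: S| = #|S|.+1 by rewrite cardsU1 h1.
by split=> //; rewrite -e cone_card.
Qed.

Lemma chi_ext S : S \in cones -> forall f g,
  (forall t, t \in link cones S -> f t = g t) -> chi S f = chi S g.
Proof. by move=> HS; case: (HE HS). Qed.

Lemma chi0 S : S \in cones -> chi S (fun _ => 0) = 1.
Proof. by move=> HS; case: (HE HS). Qed.

Lemma pairZ (a : int) (m v : 'rV[int]_n) : pair_int (a *: m) v = a * pair_int m v.
Proof. by rewrite /pair_int big_distrr; apply: eq_bigr => k _; rewrite !mxE /= mulrA. Qed.

Lemma dualvec S j : S \in cones -> j \in S ->
  exists m, forall i, i \in S -> pair_int m (u i) = (i == j)%:R.
Proof.
move=> HS Hj; have [_ _ _ Hb _] := HU.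
have [B [g [HB [Hg Hr]]]] := Hb S HS.
exists (\row_k (invmx B) k (g j)) => i Hi.
have := congr1 (fun M : 'M[int]_n => M (g i) (g j)) (mulmxV HB).
rewrite !mxE /pair_int => E.
have -> : (i == j) = (g i == g j).
  apply/eqP/eqP => [->//|]; exact: Hg.
rewrite -E; apply: eq_bigr => k _.
by rewrite -(Hr i Hi) !mxE mulrC.
Qed.

Lemma link_dual S j : S \in cones -> j \in link cones S ->
  exists mj, (forall i, i \in S -> pair_int mj (u i) = 0) /\ pair_int mj (u j) = 1.
Proof.
move=> HS /link_cone [h1 h2].
have [m Hm] := dualvec h2 (setU11 j S).
exists m; split; last by rewrite Hm ?setU11 ?eqxx.
move=> i Hi; rewrite Hm ?(setU1r _ Hi) //.
by case: eqP Hi => // ->; rewrite (negbTE h1).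
Qed.

Lemma chi_rec S j mj : S \in cones -> j \in link cones S ->
  (forall i, i \in S -> pair_int mj (u i) = 0) -> pair_int mj (u j) = 1 ->
  forall f, chi S f = chi S (fun i => f i - (i == j)%:R) +
                     chi (j |: S) (fun i => f i - f j * pair_int mj (u i)).
Proof.
move=> HS Hj H0 H1 f; case: (HE HS) => _ _ _ Hrec.
have [_ HjS] := link_cone Hj.
rewrite (Hrec j Hj f (f j *: mj)); first last.
- by rewrite pairZ H1 mulr1.
- by move=> i Hi; rewrite pairZ H0 ?mulr0.
congr (_ + _).
by apply: (chi_ext HjS) => t _; rewrite /= /mres pairZ.
Qed.

Definition pz (j : nat) (z : 'I_r -> int) := fun i : 'I_r => if (i < j)%N then z i else 0.

Lemma sum_delta (w : 'I_r -> int) (i : 'I_r) : \sum_k (i == k)%:R * w k = w i.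
Proof.
rewrite (bigD1 i) //= eqxx mul1r big1 ?addr0 // => k /negPf.
by rewrite eq_sym => ->; rewrite mul0r.
Qed.

Lemma mrep_Q (Q : {mpoly rat[r]}) : mrep (fun z => Q.@[fun i => (z i)%:~R]).
Proof. by exists Q. Qed.

Lemma mrep_Qpz (Q : {mpoly rat[r]}) (j : nat) :
  mrep (fun z => Q.@[fun i => (pz j z i)%:~R]).
Proof.
apply: mrep_ext (mrep_lin (fun i k => ((i == k) && (i < j)%N)%:R) (mrep_Q Q)) _ => z.
apply: meval_eq => i; congr (_%:~R); rewrite /pz.
case: ifP => h.
  by rewrite -(sum_delta z i); apply: eq_bigr => k _; rewrite andbT.
by rewrite big1 // => k _; rewrite andbF mul0r.
Qed.

Lemma mrep_step S : S \in cones ->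
  (forall j, j \in link cones S -> mrep (fun z => (chi (j |: S) z)%:~R)) ->
  mrep (fun z => (chi S z)%:~R).
Proof.
move=> HS IH.
have E : forall z, ((chi S z)%:~R : rat) =
   1 + \sum_(j < r) ((chi S (pz j.+1 z))%:~R - (chi S (pz j z))%:~R).
  move=> z.
  rewrite -(big_mkord xpredT (fun j => ((chi S (pz j.+1 z))%:~R - (chi S (pz j z))%:~R : rat))).
  rewrite telescope_sumr //.
  rewrite -(chi_ext HS (f := z)) => [|t _]; last by rewrite /pz ltn_ord.
  rewrite (chi_ext HS (f := pz 0 z) (g := fun _ => 0)) ?chi0 // rmorph1.
  by rewrite addrC subrK.
apply: mrep_ext _ (fun z => esym (E z)).
apply: mrep_add; first exact: mrep_const.
apply: mrep_sum => j.
case: (boolP (j \in link cones S)) => Hj; last first.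
  apply: mrep_ext (mrep_const _ 0) _ => z.
  rewrite (chi_ext HS (f := pz j.+1 z) (g := pz j z)) ?subrr // => t Ht.
  have tj : (nat_of_ord t == nat_of_ord j) = false.
    by apply/negbTE; apply: contraNneq Hj => /val_inj <-.
  by rewrite /pz ltnS leq_eqVlt tj.
have [mj [Hm0 Hm1]] := link_dual HS Hj.
have [_ HjS] := link_cone Hj.
have [P1 HP1] : mrep (fun w => (chi (j |: S) (fun i => w i - w j * pair_int mj (u i)))%:~R).
  apply: mrep_ext (mrep_lin (fun i k => (i == k)%:R - (k == j)%:R * pair_int mj (u i)) (IH j Hj)) _.
  move=> w; congr (_%:~R); apply: (chi_ext HjS) => t _.
  rewrite -(sum_delta w t).
  rewrite (eq_bigr (fun k => (t == k)%:R * w k - (k == j)%:R * pair_int mj (u t) * w k)) => [|k _]; last by rewrite mulrBl.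
  rewrite sumrB; congr (_ - _).
  rewrite (bigD1 j) //= eqxx mul1r big1 ?addr0 1?mulrC // => k /negPf ->.
  by rewrite !mul0r.
have [Q HQ] := mantidiff P1 j.
have HQ' : forall w : 'I_r -> int,
    Q.@[fun i => (w i)%:~R] - Q.@[fun i => (w i - (i == j)%:R)%:~R] =
    (chi S w)%:~R - (chi S (fun i => w i - (i == j)%:R))%:~R.
  move=> w; rewrite (chi_rec HS Hj Hm0 Hm1 w) rmorphD /= -HP1 -(HQ (fun i => (w i)%:~R)).
  have -> : Q.@[fun i => (w i - (i == j)%:R)%:~R] = Q.@[fun i => (w i)%:~R - (i == j)%:R].
    by apply: meval_eq => i; rewrite rmorphB /= rmorph_nat.
  ring.
have Hconst : forall (w : 'I_r -> int) (N : int),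
    (chi S (fun i => w i + N * (i == j)%:R))%:~R - Q.@[fun i => (w i + N * (i == j)%:R)%:~R] =
    (chi S w)%:~R - Q.@[fun i => (w i)%:~R] :> rat.
  move=> w N.
  pose g (s : int) := ((chi S (fun i => w i + s * (i == j)%:R))%:~R - Q.@[fun i => (w i + s * (i == j)%:R)%:~R]) : rat.
  have Hg : forall s, g s = g (s - 1).
    move=> s; rewrite /g.
    have := HQ' (fun i => w i + s * (i == j)%:R).
    rewrite (chi_ext HS (f := fun i => w i + s * (i == j)%:R - (i == j)%:R)
                       (g := fun i => w i + (s - 1) * (i == j)%:R)); last by move=> t _; ring.
    have -> : Q.@[fun i => ((fun i => w i + s * (i == j)%:R) i - (i == j)%:R)%:~R] =
              Q.@[fun i => (w i + (s - 1) * (i == j)%:R)%:~R].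
      by apply: meval_eq => i /=; congr (_%:~R); ring.
    move=> E1; apply/eqP; rewrite -subr_eq0; apply/eqP; move: E1; lra.
  have := int_const Hg N; rewrite /g => ->.
  rewrite (chi_ext HS (g := w)); last by move=> t _; ring.
  by congr (_ - _); apply: meval_eq => i; rewrite mul0r addr0.
apply: mrep_ext (mrep_sub (mrep_Qpz Q j.+1) (mrep_Qpz Q j)) _ => z.
have Hp : forall t, pz j.+1 z t = pz j z t + z j * (t == j)%:R.
  move=> t; rewrite /pz ltnS leq_eqVlt.
  case: (eqVneq t j) => [->|tj]; first by rewrite eqxx ltnn mulr1 add0r.
  have -> : (nat_of_ord t == nat_of_ord j) = false by apply/negbTE; apply: contra_neq tj => /val_inj.
  by rewrite mulr0 addr0.
have := Hconst (pz j z) (z j).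
rewrite -(chi_ext HS (f := pz j.+1 z)) => [|t _]; last by rewrite Hp.
rewrite -(meval_eq _ (v1 := fun i => (pz j.+1 z i)%:~R)) => [|i]; last by rewrite Hp.
move=> E1; apply/eqP; rewrite -subr_eq0; apply/eqP; move: E1; lra.
Qed.

Lemma mrep_chi e S : S \in cones -> (d - #|S| <= e)%N -> mrep (fun z => (chi S z)%:~R).
Proof.
elim: e S => [|e IH] S HS He; apply: mrep_step => // j Hj;
  have [c1 c2] := link_card Hj; have [_ HjS] := link_cone Hj.
  by exfalso; move: He c2; lia.
by apply: IH => //; rewrite c1; move: He c2; lia.
Qed.

Definition Xf (b : 'I_r -> int) : {mpoly int[r]} := \sum_(i < r) (b i)%:MP * 'X_i.
Definition xs (S : {set 'I_r}) : {mpoly int[r]} := \prod_(i in S) 'X_i.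
Definition Wf (S : {set 'I_r}) (b : 'I_r -> int) := L (Xf b ^+ (d - #|S|) * xs S).

Lemma LD p q : L (p + q) = L p + L q.
Proof. by case: HL. Qed.

Lemma L0 : L 0 = 0.
Proof. have := LD 0 0; rewrite addr0; lia. Qed.

Lemma LN p : L (- p) = - L p.
Proof. have := LD p (- p); rewrite subrr L0; lia. Qed.

Lemma LB p q : L (p - q) = L p - L q.
Proof. by rewrite LD LN. Qed.

Lemma Lsum (I : Type) (s : seq I) (F : I -> {mpoly int[r]}) :
  L (\sum_(i <- s) F i) = \sum_(i <- s) L (F i).
Proof.
elim: s => [|i s IH]; first by rewrite !big_nil L0.
by rewrite !big_cons LD IH.
Qed.

Lemma LMn p k : L (p *+ k) = L p *+ k.
Proof. by elim: k => [|k IH]; rewrite ?mulr0n ?L0 // !mulrS LD IH. Qed.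

Lemma LC (c : int) p : L (c%:MP * p) = c * L p.
Proof.
have pos : forall k : nat, L ((Posz k)%:MP * p) = Posz k * L p.
  move=> k; have -> : (Posz k)%:MP = (1 : {mpoly int[r]}) *+ k.
    by rewrite -natz rmorph_nat.
  by rewrite mulrnAl mul1r LMn -mulr_natl natz.
case: c => k; first exact: pos.
by rewrite NegzE rmorphN mulNr LN pos mulNr.
Qed.

Lemma Xf_homog b : Xf b \is 1.-homog.
Proof.
apply: rpred_sum => i _; rewrite mul_mpolyC; apply: dhomogZ.
apply/dhomogP => m; rewrite msuppX inE => /eqP ->; exact: mdeg1.
Qed.

Lemma xsE S : xs S = 'X_[\sum_(i in S) U_(i)].
Proof. by rewrite /xs mprodXE. Qed.

Lemma xs_homog S : xs S \is #|S|.-homog.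
Proof.
have E : mdeg (\sum_(i in S) U_(i))%MM = #|S|.
  rewrite mdeg_sum (eq_bigr (fun _ => 1%N)) ?sum1_card //.
  by move=> i _; rewrite mdeg1.
by rewrite xsE; apply/dhomogP => m; rewrite msuppX inE => /eqP ->; exact: E.
Qed.

Lemma xsU1 (S : {set 'I_r}) j : j \notin S -> xs (j |: S) = 'X_j * xs S.
Proof. by move=> h; rewrite /xs big_setU1. Qed.

Lemma LJ1 (S : {set 'I_r}) j b D : j \notin S -> j |: S \notin cones -> (D + #|S|.+1 = d)%N ->
  L (Xf b ^+ D * ('X_j * xs S)) = 0.
Proof.
move=> jS jSc HD; case: HL => _ HL2 _; apply: HL2.
  have -> : d = (1 * D + (1 + #|S|))%N by lia.
  apply: dhomogM; first exact: dhomogMn (Xf_homog b).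
  apply: dhomogM; rewrite ?xs_homog //.
  by apply/dhomogP => m; rewrite msuppX inE => /eqP ->; exact: mdeg1.
pose e := (U_(j) + \sum_(i in S) U_(i))%MM.
have Ey : 'X_j * xs S = 'X_[e] by rewrite xsE -mpolyXD.
pose q := Xf b ^+ D.
exists [seq ((q@_m)%:MP, ('X_[(m + e)%MM] : {mpoly int[r]})) | m <- msupp q]; split.
  move=> x /mapP [m _ ->] /=; left; exists (m + e)%MM; split => //.
  apply: contra jSc => Hc.
  case: HU => _ _ Hsub _ _; apply: Hsub Hc _.
  apply/subsetP => i; rewrite !inE mnmDE mnmDE mnm_sumE => /orP [/eqP ->|Hi].
    by rewrite mnm1E eqxx; lia.
  rewrite (bigD1 i Hi) /= [U_(i)%MM i]mnm1E eqxx; lia.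
rewrite big_map Ey -/q.
have Eq : q = \sum_(m <- msupp q) q@_m *: 'X_[m] := mpolyE q.
rewrite {1}Eq mulr_suml; apply: eq_bigr => m _.
by rewrite mpolyXD mul_mpolyC scalerAl.
Qed.

Lemma LJ2 (S : {set 'I_r}) j b (mj : 'rV[int]_n) D : (D + #|S|.+1 = d)%N ->
  L (Xf (fun i => b i - b j * pair_int mj (u i)) ^+ D * ('X_j * xs S)) =
  L (Xf b ^+ D * ('X_j * xs S)).
Proof.
move=> HD.
pose J := \sum_(i < r) (pair_int mj (u i))%:MP * ('X_i : {mpoly int[r]}).
have EX : Xf (fun i => b i - b j * pair_int mj (u i)) = Xf b - (b j)%:MP * J.
  rewrite /Xf /J mulr_sumr -sumrB; apply: eq_bigr => i _.
  by rewrite rmorphB rmorphM /= mulrBl mulrA.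
set y := 'X_j * xs S.
have Hy : y \is (1 + #|S|).-homog.
  apply: dhomogM; rewrite ?xs_homog //.
  by apply/dhomogP => m; rewrite msuppX inE => /eqP ->; exact: mdeg1.
have Hd : d = (1 * D + (1 + #|S|))%N by lia.
apply/eqP; rewrite -subr_eq0 -LB; apply/eqP.
case: HL => _ HL2 _; apply: HL2.
  rewrite Hd; apply: rpredB; apply: dhomogM => //; apply: dhomogMn.
    rewrite EX; apply: rpredB; first exact: Xf_homog.
    rewrite mul_mpolyC; apply: dhomogZ.
    apply: rpred_sum => i _; rewrite mul_mpolyC; apply: dhomogZ.
    by apply/dhomogP => m; rewrite msuppX inE => /eqP ->; exact: mdeg1.
  exact: Xf_homog.
exists [:: (- (b j)%:MP * (\sum_(i < D) Xf (fun i => b i - b j * pair_int mj (u i)) ^+ (D.-1 - i) * Xf b ^+ i) * y, J)].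
split.
  by move=> x; rewrite inE => /eqP -> /=; right; exists mj.
rewrite big_seq1 /= -mulrBl subrXX EX.
rewrite (_ : Xf b - (b j)%:MP * J - Xf b = - (b j)%:MP * J); last by ring.
ring.
Qed.

Lemma ltS_ord (t j : 'I_r) : (t < j.+1)%N = (t == j) || (t < j)%N.
Proof. by rewrite ltnS leq_eqVlt. Qed.

Lemma KL (S : {set 'I_r}) b D : S \in cones -> (D.+1 + #|S| = d)%N ->
  (forall i, i \in S -> b i = 0) ->
  \sum_(j < r) (if j \in link cones S then b j * L (Xf b ^+ D * ('X_j * xs S)) else 0) =
  L (Xf b ^+ D.+1 * xs S).
Proof.
move=> HS HD Hb.
have -> : Xf b ^+ D.+1 * xs S = \sum_(j < r) (b j)%:MP * (Xf b ^+ D * ('X_j * xs S)).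
  rewrite exprS {1}/Xf !mulr_suml; apply: eq_bigr => j _; ring.
rewrite Lsum; apply: eq_bigr => j _; rewrite LC.
case: ifP => // Hj.
case: (boolP (j \in S)) => jS; first by rewrite Hb // mul0r.
rewrite LJ1 ?mulr0 //; last by lia.
by apply: contraFN Hj => h; rewrite inE jS h.
Qed.

Definition Claim (S : {set 'I_r}) := forall b c : 'I_r -> int, (forall i, i \in S -> b i = 0) ->
  urep (d - #|S|) ((Wf S b)%:~R / ((d - #|S|)`!)%:R)
       (fun k => (chi S (fun i => k * b i + c i))%:~R).

Lemma B_base S : S \in cones -> #|S| = d -> Claim S.
Proof.
move=> HS Hc b c Hb; rewrite /Wf Hc subnn expr0 mul1r fact0 divr1.
have -> : L (xs S) = 1 by case: HL => _ _ H3; apply: H3.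
exists 1%:P; split.
- exact: size_polyC_leq1.
- by rewrite coefC rmorph1.
- move=> k; rewrite hornerC (chi_ext HS (g := fun _ => 0)) ?chi0 ?rmorph1 //.
  by move=> t /link_card [_]; rewrite Hc ltnn.
Qed.

Lemma B_step S D : S \in cones -> (d - #|S| = D.+1)%N ->
  (forall j, j \in link cones S -> Claim (j |: S)) -> Claim S.
Proof.
move=> HS HD IH b c Hb; rewrite HD.
have Hcard := cone_card HS.
pose F k := ((chi S (fun i => k * b i + c i))%:~R : rat).
pose Y (k : int) (j : nat) := fun i : 'I_r => (k - 1) * b i + c i + (if (i < j)%N then b i else 0).
pose l (j : 'I_r) := ((if j \in link cones S then b j * L (Xf b ^+ D * ('X_j * xs S)) else 0)%:~R
                      / (D`!)%:R : rat).
have Hterm : forall j : 'I_r, urep D (l j) (fun k => (chi S (Y k j.+1))%:~R - (chi S (Y k j))%:~R).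
  move=> j; case: (boolP (j \in link cones S)) => Hj; last first.
    rewrite /l (negbTE Hj) rmorph0 mul0r.
    apply: urep_ext (urep0 D) _ => k.
    rewrite (chi_ext HS (f := Y k j.+1) (g := Y k j)) ?subrr // => t Ht.
    have tj : (nat_of_ord t == nat_of_ord j) = false.
      by apply/negbTE; apply: contraNneq Hj => /val_inj <-.
    by rewrite /Y ltnS leq_eqVlt tj.
  have [mj [Hm0 Hm1]] := link_dual HS Hj.
  have [Hc1 Hc2] := link_card Hj; have [jS HjS] := link_cone Hj.
  have eD : (d - #|j |: S| = D)%N by rewrite Hc1; lia.
  pose b' := fun i => b i - b j * pair_int mj (u i).
  pose c' (s : int) := fun i : 'I_r => - b i + c i + (if (i < j)%N then b i else 0)
       + s * (i == j)%:R - (- b j + c j + s) * pair_int mj (u i).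
  pose G (k s : int) := ((chi S (fun i => Y k j i + s * (i == j)%:R))%:~R : rat).
  pose phi (k s : int) := ((chi (j |: S) (fun i => k * b' i + c' s i))%:~R : rat).
  have EG : forall k s, G k s - G k (s - 1) = phi k s.
    move=> k s.
    have E1 : chi S (fun i => Y k j i + s * (i == j)%:R) =
       chi S (fun i => Y k j i + (s - 1) * (i == j)%:R) + chi (j |: S) (fun i => k * b' i + c' s i).
      rewrite (chi_rec HS Hj Hm0 Hm1); congr (_ + _).
        by apply: (chi_ext HS) => t _; ring.
      apply: (chi_ext HjS) => t _; rewrite /Y /b' /c' ltnn eqxx /=; ring.
    by rewrite /G /phi E1 rmorphD /=; ring.
  have Hp : forall s, urep D ((Wf (j |: S) b')%:~R / ((D`!)%:R)) (fun k => phi k s).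
    move=> s; have := IH j Hj b' (c' s); rewrite eD; apply.
    move=> i; rewrite in_setU1 => /orP [/eqP ->|Hi]; first by rewrite /b' Hm1 mulr1 subrr.
    by rewrite /b' Hm0 // Hb // mulr0 subrr.
  have := urep_sumstep EG Hp (b j).
  have -> : (b j)%:~R * ((Wf (j |: S) b')%:~R / (D`!)%:R) = l j.
    rewrite /l Hj /Wf eD xsU1 // LJ2; last by lia.
    by rewrite rmorphM /= mulrA.
  move/urep_ext; apply => k.
  rewrite /G; congr (_%:~R - _%:~R); apply: (chi_ext HS) => t _.
    rewrite /Y ltS_ord.
    case: (eqVneq t j) => [->|tj] /=; first by rewrite ltnn mulr1 addr0.
    by rewrite mulr0 addr0.
  by rewrite mul0r addr0.
have Hsum := urep_sum (index_enum 'I_r) Hterm.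
have Hdiff : forall k, F k - F (k - 1) =
    \sum_(j < r) ((chi S (Y k j.+1))%:~R - (chi S (Y k j))%:~R).
  move=> k.
  rewrite -(big_mkord xpredT (fun j => ((chi S (Y k j.+1))%:~R - (chi S (Y k j))%:~R : rat))).
  rewrite telescope_sumr //.
  by congr (_%:~R - _%:~R); apply: (chi_ext HS) => t _; rewrite /Y ?ltn_ord /=; ring.
have := urep_step Hdiff Hsum.
have -> : (\sum_(j <- index_enum 'I_r) l j) / D.+1%:R =
          (Wf S b)%:~R / ((D.+1)`!)%:R.
  rewrite /l -mulr_suml -rmorph_sum /= KL //; last by lia.
  rewrite /Wf HD factS natrM; field.
  rewrite pnatr_eq0 -lt0n fact_gt0 /=.
  by rewrite addrC natr1 pnatr_eq0.
by [].
Qed.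

Lemma claim_all e S : S \in cones -> (d - #|S| = e)%N -> Claim S.
Proof.
elim: e S => [|e IH] S HS He.
  by apply: B_base => //; have := cone_card HS; lia.
apply: (B_step HS He) => j Hj.
have [c1 c2] := link_card Hj; have [_ HjS] := link_cone Hj.
by apply: IH => //; rewrite c1; lia.
Qed.

Lemma final_main :
  exists P : {mpoly rat[r]},
    (forall z : 'I_r -> int,
        P.@[fun i => (z i)%:~R] =
        (chi set0 (fun j => \sum_(i < r) z i * courant i j))%:~R)
    /\ (forall z : 'I_r -> int,
        (homog_part (fan_dim cones) P).@[fun i => (z i)%:~R] =
        (volume_poly_val (fan_dim cones) L z)%:~R / ((fan_dim cones)`!)%:R).
Proof.
have H0 : set0 \in cones by case: HU.
have [P HP] := mrep_chi H0 (leqnn _).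
exists P; split.
  move=> z; rewrite HP; congr (_%:~R); apply: (chi_ext H0) => t _.
  rewrite -(sum_delta z t); apply: eq_bigr => i _; by rewrite /courant mulrC eq_sym.
move=> z.
have := @claim_all _ set0 H0 (erefl _) z (fun _ => 0).
have Hb0 : forall i, i \in (set0 : {set 'I_r}) -> z i = 0 by move=> i; rewrite in_set0.
move/(_ Hb0); rewrite cards0 subn0 => [[p [ps pc pv]]].
have [Q [HQ1 HQ2]] := homog_line (fan_dim cones) P (fun i => (z i)%:~R).
have EQ : Q = p.
  apply/eqP; rewrite -subr_eq0; apply/eqP; apply: poly_int_roots => k.
  rewrite hornerD hornerN HQ1 pv -HP; apply/eqP; rewrite subr_eq0; apply/eqP.
  by apply: meval_eq => i /=; rewrite addr0 rmorphM.
rewrite /homog_part -HQ2 EQ pc /Wf /volume_poly_val cards0 subn0 /xs big_set0 mulr1.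
by [].
Qed.

End Main.


Theorem proposition3 (n r : nat) (u : 'I_r -> 'rV[int]_n)
    (cones : {set {set 'I_r}})
    (chi : {set 'I_r} -> ('I_r -> int) -> int)
    (L : {mpoly int[r]} -> int) :
  unimodular_fan u cones ->
  ehrhart_family u cones chi ->
  is_deg_map u cones L ->
  exists P : {mpoly rat[r]},
    (forall z : 'I_r -> int,
        P.@[fun i => (z i)%:~R] =
        (chi set0 (fun j => \sum_(i < r) z i * courant i j))%:~R)
    /\ (forall z : 'I_r -> int,
        (homog_part (fan_dim cones) P).@[fun i => (z i)%:~R] =
        (volume_poly_val (fan_dim cones) L z)%:~R / ((fan_dim cones)`!)%:R).
Proof.
move=> HU HE HL; exact: (final_main HU HE HL).
Qed.
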